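(* Let $n\ge3$ and $x^\Lambda\partial_k\in\mathcal{B}$. Then $\mathrm{WD}(x^\Lambda\partial_k)\ge n-k$, with equality if and only if $x^\Lambda\partial_k=x_1^{\lambda_1}\partial_k$. Moreover, if $\mathrm{lev}_i(x^\Lambda\partial_k)\le i$ for some integer $i\ge-1$, then $\mathrm{WD}(x^\Lambda\partial_k)\le n-1$, with equality if and only if $x^\Lambda\partial_k=\partial_1$.
   Context: Fix an integer $n\ge 3$. A partition is a sequence $\Lambda=(\lambda_j)_{j\ge1}$ of non-negative integers with finite support; $\mathrm{wt}(\Lambda)=\sum_j j\lambda_j$; $\mathrm{Part}(k)$ is the set of partitions with $\lambda_j=0$ for $j>k$. Write $x^\Lambda=\prod_j x_j^{\lambda_j}$, $\deg(x^\Lambda)=\sum_j\lambda_j$. $\mathcal{B}=\{x^\Lambda\partial_k : 1\le k\le n,\ \Lambda\in\mathrm{Part}(k-1)\}$. For an integer $i\ge-1$, let $r_i\in\{1,\dots,n-1\}$ with $i\equiv r_i\pmod{n-1}$ and $h_i=\lfloor (i-1)/(n-1)\rfloor+1$. Define $\mathrm{WD}(x^\Lambda\partial_k)=\mathrm{wt}(\Lambda)-\deg(x^\Lambda)+n-k$ and $\mathrm{lev}_i(x^\Lambda\partial_k)=h_i\,\mathrm{WD}(x^\Lambda\partial_k)+\deg(x^\Lambda)-1$. *)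

(* Defs.v *)
From mathcomp Require Import all_boot all_order all_algebra.
Set Implicit Arguments. Unset Strict Implicit. Unset Printing Implicit Defensive.
Import Order.TTheory GRing.Theory Num.Theory.
Local Open Scope ring_scope.

(* A partition Lambda = (lambda_j)_{j>=1} is represented by lam : nat -> nat,
   lambda_j = lam j for j >= 1 (the value lam 0 is never used).
   x^Lambda d_k is in B iff 1 <= k <= n and Lambda in Part(k-1),
   i.e. lambda_j = 0 for all j > k-1. *)
Definition inB (n k : nat) (lam : nat -> nat) : Prop :=
  (1 <= k <= n)%N /\ (forall j : nat, (k <= j)%N -> lam j = 0%N).

(* weight and degree; since the support of Lambda lies in [1, k-1],
   the sums over 1 <= j < k are the full (finite-support) sums. *)
Definition wt (k : nat) (lam : nat -> nat) : nat := (\sum_(1 <= j < k) j * lam j)%N.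
Definition deg (k : nat) (lam : nat -> nat) : nat := (\sum_(1 <= j < k) lam j)%N.

Definition WD (n k : nat) (lam : nat -> nat) : int :=
  (wt k lam)%:Z - (deg k lam)%:Z + n%:Z - k%:Z.

(* h_i = floor((i-1)/(n-1)) + 1  (divz is floor division for positive divisor) *)
Definition hh (n : nat) (i : int) : int := ((i - 1) %/ (n%:Z - 1))%Z + 1.

Definition lev (n : nat) (i : int) (k : nat) (lam : nat -> nat) : int :=
  hh n i * WD n k lam + (deg k lam)%:Z - 1.

(* Main.v *)
Require Import Defs.
From mathcomp Require Import all_boot all_order all_algebra.
From mathcomp Require Import zify.
Import Order.TTheory GRing.Theory Num.Theory.
Local Open Scope ring_scope.

Definition SS (k : nat) (lam : nat -> nat) : nat := (\sum_(1 <= j < k) (j - 1) * lam j)%N.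

Lemma wtE k lam : wt k lam = (SS k lam + deg k lam)%N.
Proof.
rewrite /wt /SS /deg -big_split; apply: eq_big_nat => j /andP[hj _].
by case: j hj => // j _; rewrite subSS subn0 mulSn addnC.
Qed.

Lemma SSbound k lam : (SS k lam <= k.-2 * deg k lam)%N.
Proof.
rewrite /SS /deg big_distrr /= big_nat_cond [X in (_ <= X)%N]big_nat_cond.
apply: leq_sum => j /andP[/andP[h1 h2] _]; apply: leq_mul => //; lia.
Qed.

Lemma degpos k lam : (0 < deg k lam)%N -> (2 <= k)%N.
Proof.
rewrite /deg; case: k => [|[|k]] //; by rewrite big_geq.
Qed.

Lemma SS0 k lam : (SS k lam = 0)%N <-> (forall j, (2 <= j < k)%N -> lam j = 0%N).
Proof.
rewrite /SS; split.
- move/eqP; rewrite sum_nat_seq_eq0 => /allP H j /andP[h1 h2].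
  have : j \in index_iota 1 k by rewrite mem_index_iota; lia.
  move/H => /=; rewrite muln_eq0; case/orP => /eqP; [lia| by []].
- move=> H; apply: big1_seq => j /andP[_]; rewrite mem_index_iota => hj.
  case: (leqP 2 j) => hj2; first by rewrite H ?muln0 //; lia.
  have -> : (j - 1 = 0)%N by lia.
  by rewrite mul0n.
Qed.

Theorem lemma2p2 (n k : nat) (lam : nat -> nat) :
  (3 <= n)%N -> inB n k lam ->
  [/\ n%:Z - k%:Z <= WD n k lam,
      (WD n k lam = n%:Z - k%:Z <-> (forall j : nat, (2 <= j)%N -> lam j = 0%N)) &
      forall i : int, -1 <= i -> lev n i k lam <= i ->
        WD n k lam <= n%:Z - 1 /\
        (WD n k lam = n%:Z - 1 <-> (k = 1%N /\ forall j : nat, (1 <= j)%N -> lam j = 0%N))].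
Proof.
move=> hn [/andP[hk1 hkn] hlam].
have hWD : WD n k lam = (SS k lam)%:Z + n%:Z - k%:Z.
  rewrite /WD wtE PoszD; lia.
have hb := SSbound k lam.
have hdp := @degpos k lam.
split.
- rewrite hWD; lia.
- rewrite hWD; split.
  + move=> h; have /SS0 H : SS k lam = 0%N by lia.
    move=> j hj; case: (ltnP j k) => hjk; first by apply: H; lia.
    exact: hlam.
  + move=> H; have -> : SS k lam = 0%N by apply/SS0 => j /andP[hj _]; apply: H.
    lia.
- move=> i hi; rewrite /lev /hh.
  set q := ((i - 1) %/ (n%:Z - 1))%Z.
  have hn1 : (0 : int) < n%:Z - 1 by lia.
  have hc := ltz_ceil (i - 1) hn1.
  have hf := lez_floor (i - 1) (lt0r_neq0 hn1).
  rewrite -/q in hc hf.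
  have hq : -1 <= q by nia.
  have hiq : i <= (n%:Z - 1) * (q + 1) by nia.
  rewrite hWD => hlev.
  have [k1|k1] := eqVneq k 1%N.
  + subst k.
    have hs : SS 1 lam = 0%N by rewrite /SS big_geq.
    rewrite hs; split; first lia.
    split=> _; last lia.
    by split=> // j hj; apply: hlam.
  + have hk2 : (2 <= k)%N by lia.
    suff : (SS k lam <= k - 2)%N by move=> hs; split; [lia | split=> h; [lia| case: h; lia]].
    set s := SS k lam in hb hlev *; set d := deg k lam in hb hdp hlev *.
    have [hd0|hd1] := leqP d 0.
      have hd : d = 0%N by lia. by move: hb; rewrite hd muln0 leqn0 => /eqP ->.
    have hqc : q + 1 = 0 \/ 1 <= q + 1 by lia.
    case: hqc => hqc.
      rewrite hqc mul0r in hlev hiq. have hd : d = 1%N by lia.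
      by move: hb; rewrite hd muln1; lia.
    have h1 : (q + 1) * (s%:Z - k%:Z + 1) <= 1 - d%:Z by nia.
    have h2 : s%:Z - k%:Z + 1 <= 0 by nia.
    have [hs|hs] := eqVneq (s%:Z - k%:Z + 1) 0.
      rewrite hs mulr0 in h1. have hd : d = 1%N by lia.
      by move: hb; rewrite hd muln1; lia.
    lia.
Qed.
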